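(* Let $k\ge 1$ and let $G$ be a maximal $k$-degenerate graph with at least $k+2$ vertices. Then no two vertices of degree exactly $k$ in $G$ are adjacent.
   Context: $G$ is a finite simple undirected graph. For a vertex ordering $\phi:V\to\{1,\dots,|V|\}$ and a vertex $v$, let $d_p(v)$ be the number of neighbours $u$ of $v$ with $\phi(u)<\phi(v)$. $G$ is a maximal $k$-degenerate graph if it has a vertex ordering $\phi$ with $d_p(v)=\min(k,\phi(v)-1)$ for every vertex $v$. *)

(* Defs.v *)
From mathcomp Require Import all_boot.
Set Implicit Arguments. Unset Strict Implicit. Unset Printing Implicit Defensive.

Definition simple_graph (T : finType) (e : rel T) : Prop :=
  symmetric e /\ irreflexive e.

Definition deg (T : finType) (e : rel T) (v : T) : nat := #|[set u | e v u]|.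

(* Vertex orderings phi : V -> {1,...,|V|} are represented 0-based as
   bijections phi : T -> 'I_#|T| (position phi v + 1 in the paper). *)
Definition dp (T : finType) (e : rel T) (phi : T -> 'I_#|T|) (v : T) : nat :=
  #|[set u | e v u & phi u < phi v]|.

(* Maximal k-degenerate: some ordering with d_p(v) = min(k, phi(v) - 1)
   (with 0-based phi, phi(v)-1 becomes phi v). *)
Definition maximal_k_degenerate (T : finType) (e : rel T) (k : nat) : Prop :=
  exists phi : T -> 'I_#|T|, bijective phi /\
    forall v : T, dp e phi v = minn k (phi v).

(* Main.v *)
Require Import Defs.
From mathcomp Require Import all_boot.

Lemma card_ltp (T : finType) (phi : T -> 'I_#|T|) :
  bijective phi -> forall p, p <= #|T| -> #|[set y | phi y < p]| = p.
Proof.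
move=> bij p hp.
have inj := bij_inj bij.
rewrite -(card_imset _ inj).
have winj : injective (widen_ord hp) by move=> a b /(congr1 val) /= h; apply: val_inj.
have -> : phi @: [set y | phi y < p] = widen_ord hp @: [set: 'I_p].
  apply/setP => i; apply/imsetP/imsetP.
  - case=> y; rewrite inE => hy ->.
    by exists (Ordinal hy) => //; apply/val_inj.
  - case=> j _ ->; case: bij => g gK Kg.
    exists (g (widen_ord hp j)); last by rewrite Kg.
    by rewrite inE Kg /=.
by rewrite (card_imset _ winj) cardsT card_ord.
Qed.

Theorem mainTheorem12 (T : finType) (e : rel T) (k : nat) :
  simple_graph e -> 1 <= k -> maximal_k_degenerate e k -> k + 2 <= #|T| ->
  forall u v : T, deg e u = k -> deg e v = k -> ~~ e u v.
Proof.
move=> [esy eirr] k1 [phi [bij Hdp]] Hn.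
have inj := bij_inj bij.
suff H : forall u v, phi u < phi v -> deg e u = k -> deg e v = k -> ~~ e u v.
  move=> u v du dv; case: (ltngtP (phi u) (phi v)) => h.
  - exact: H.
  - by rewrite esy; apply: H.
  - by rewrite (inj _ _ (val_inj h)) eirr.
move=> u v luv du dv; apply/negP => euv.
have earlier x : phi x <= k -> forall y, phi y < phi x -> e x y.
  move=> hx y hy.
  have hd : dp e phi x = phi x by rewrite Hdp; apply/minn_idPr.
  have sub : [set y | e x y & phi y < phi x] \subset [set y | phi y < phi x].
    by apply/subsetP => z; rewrite !inE => /andP[].
  have : [set y | e x y & phi y < phi x] == [set y | phi y < phi x].
    rewrite eqEcard sub /= -[#|[set _ | _ & _]|]/(dp e phi x) hd.
    by rewrite card_ltp // ltnW.
  by move/eqP/setP/(_ y); rewrite !inE hy andbT => ->.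
have clique x y : phi x <= k -> phi y <= k -> x != y -> e x y.
  move=> hx hy nxy; case: (ltngtP (phi x) (phi y)) => h.
  - by rewrite esy; apply: earlier.
  - exact: earlier.
  - by rewrite (inj _ _ (val_inj h)) eqxx in nxy.
have uk : phi u < k.
  rewrite ltnNge; apply/negP => ku.
  have hd : dp e phi u = k by rewrite Hdp; apply/minn_idPl.
  have sub : v |: [set y | e u y & phi y < phi u] \subset [set y | e u y].
    by apply/subsetP => z; rewrite !inE => /orP[/eqP -> //|/andP[] //].
  move: (subset_leq_card sub); rewrite cardsU1 inE.
  have -> : (phi v < phi u) = false by rewrite ltnNge ltnW.
  rewrite andbF /= add1n.
  by rewrite -[#|[set _ | _ & _]|]/(dp e phi u) hd -/(deg e u) du ltnn.
set C := [set y | phi y < k.+1].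
have cC : #|C| = k.+1 by rewrite card_ltp // (leq_trans _ Hn) // addn2.
have Nx x : x \in C -> deg e x = k -> [set y | e x y] = C :\ x.
  move=> xC dx; apply/eqP; rewrite eq_sym eqEcard; apply/andP; split.
    apply/subsetP => y; rewrite !inE => /andP[nyx yC]; apply: clique => //.
      by move: xC; rewrite inE.
    by rewrite eq_sym.
  by move: (cardsD1 x C); rewrite xC cC add1n => -[<-]; rewrite -/(deg e x) dx.
have uC : u \in C by rewrite inE ltnS (ltnW uk).
have Nu := Nx u uC du.
have vC : v \in C by move/setP/(_ v): Nu; rewrite !inE euv => /esym/andP[].
have Nv := Nx v vC dv.
have hk : k.+1 < #|T| by rewrite addn2 in Hn.
case: bij => g gK Kg.
set w := g (Ordinal hk).
have pw : phi w = k.+1 :> nat by rewrite /w Kg.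
have hd : dp e phi w = k by rewrite Hdp pw; apply/minn_idPl.
have sub : [set y | e w y & phi y < phi w] \subset C :\ u :\ v.
  apply/subsetP => y; rewrite !inE pw => /andP[ewy ->]; rewrite andbT.
  apply/andP; split; apply/negP => /eqP eq; subst y.
  - move/setP/(_ w): Nv; rewrite !inE esy ewy pw ltnn andbF => //.
  - move/setP/(_ w): Nu; rewrite !inE esy ewy pw ltnn andbF => //.
move: (subset_leq_card sub); rewrite -[#|[set _ | _ & _]|]/(dp e phi w) hd.
have vCu : v \in C :\ u by rewrite in_setD1 vC andbT; apply/eqP => eq; subst v; rewrite ltnn in luv.
have c1 := cardsD1 u C; have c2 := cardsD1 v (C :\ u).
rewrite uC cC add1n in c1; case: c1 => c1.
rewrite vCu -c1 add1n in c2.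
by rewrite {1}c2 ltnn.
Qed.
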